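(* Let $N\in\mathbb{N}$, $\Lambda\subseteq P_N$, $N(\Lambda):=N-|\Lambda|$. (i) For any $\lambda\subseteq P_{N(\Lambda)}$, $\pi_\lambda\circ\pi_\Lambda=\pi_{\varphi(\lambda)\cup\Lambda}$, where $\varphi$ is the unique strictly increasing bijection $P_{N(\Lambda)}\to P_N\smallsetminus\Lambda$. (ii) $\pi_\Lambda:\mathbb{D}_N\to\mathbb{D}_{N(\Lambda)}$ is surjective, and its restriction to $\mathcal{D}_N$ induces a continuous surjective map $\pi_\Lambda:\mathcal{D}_N\to\mathcal{D}_{N(\Lambda)}$ that sends $\{(w,a,\theta)\in\mathcal{D}_N: a^{-1}[0]=\Lambda\}$ onto $\mathcal{D}^\circ_{N(\Lambda)}$. (iii) The function $\mathrm{Re}[\pi]:\mathbb{D}_N\to\mathbb{R}$, $\mathrm{Re}[\pi](w,a,\theta):=\mathrm{Re}(\pi(w,a,\theta))$, is continuous and surjective.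
   Context: $\mathbb{N}=\{0,1,\dots\}$, $P_N=\{1,\dots,N\}$ ($P_0=\emptyset$); vectors $v\in\mathbb{C}^N$ are functions on $P_N$, $v^{-1}[S]=\{\ell:v_\ell\in S\}$; $\mathrm{Tr}(v,\Lambda):=\sum_{\ell\in\Lambda}v_\ell$. $\mathcal{C}:=\{z:\mathrm{Re}(z)>0\text{ or }z\in i\mathbb{R}_{>0}\}$, $\mathcal{C}^\circ$ the open right half-plane, $\mathbb{R}^*=\mathbb{R}\smallsetminus\{0\}$. For $N\ge1$: $\mathbb{D}_N:=\{(w,a,\theta)\in\mathbb{C}\times\mathbb{C}^N\times\mathbb{R}^N:a^{-1}[0]\subseteq\theta^{-1}[\mathbb{R}\smallsetminus\mathbb{Z}]\}$, $\pi(w,a,\theta):=w-\mathrm{Tr}(a,a^{-1}[-\mathcal{C}])$, $\mathcal{D}_N:=\{(w,a,\theta)\in\mathbb{D}_N:\pi(w,a,\theta)\in\mathcal{C}^\circ,\ a\in(\mathbb{C}\smallsetminus i\mathbb{R}^* )^N\}$, and $\mathcal{D}_N^\circ$ is its interior. For $N=0$: $\mathbb{D}_0:=\mathbb{C}$, $\mathcal{D}_0:=\{w:\mathrm{Re}(w)>0\}$ (open). Projections $\pi_\Lambda=\pi_{\Lambda,N}:\mathbb{D}_N\to\mathbb{D}_{N(\Lambda)}$: if $\Lambda=\emptyset$, the identity; if $\Lambda=P_N\ne\emptyset$, $\pi_\Lambda=\pi$; if $\Lambda$ is a nonempty proper subset, $\pi_\Lambda(w,a,\theta):=(w-\mathrm{Tr}(a,\Lambda\cap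 a^{-1}[-\mathcal{C}]),\hat a_\Lambda,\hat\theta_\Lambda)$, where $\hat v_\Lambda:=v\circ\varphi\in\mathbb{C}^{N(\Lambda)}$ with $\varphi$ the strictly increasing bijection $P_{N(\Lambda)}\to P_N\smallsetminus\Lambda$. *)

(* Defs.v *)
From HB Require Import structures.
From mathcomp Require Import all_boot all_order all_algebra.
From mathcomp Require Import all_classical all_reals all_analysis.
From mathcomp Require Import complex.
Import numFieldNormedType.Exports.
Import Order.TTheory GRing.Theory Num.Theory.

Set Implicit Arguments.
Unset Strict Implicit.
Unset Printing Implicit Defensive.

Local Open Scope ring_scope.
Local Open Scope classical_set_scope.

(* The (Euclidean) metric topology of C = R[i], induced by its norm. *)
HB.instance Definition _ (R : rcfType) :=
  PseudoPointedMetric.copy R[i] (R[i] : numFieldType)^o.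

Lemma card_setC_ord (N : nat) (L : {set 'I_N}) : #|~: L| = (N - #|L|)%N.
Proof. move: (cardsC L); rewrite card_ord; move: #|~: L| #|L| => k m <-; by rewrite addKn. Qed.

(* phi : P_{N(L)} -> P_N \ L, the strictly increasing bijection:
   the j-th element (in increasing order) of the complement of L. *)
Definition phi (N : nat) (L : {set 'I_N}) (j : 'I_(N - #|L|)) : 'I_N :=
  enum_val (cast_ord (esym (card_setC_ord L)) j).

Arguments phi {N} L j.

Definition hatv (T : Type) (N : nat) (L : {set 'I_N}) (v : 'rV[T]_N)
  : 'rV[T]_(N - #|L|) := \row_j v ord0 (phi L j).

Arguments hatv {T N} L v.

Section Defs.
Variable R : realType.
Local Notation C := (R[i]).

(* The ambient space C x C^N x R^N (vectors in C^N, R^N are row vectors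
   indexed by 'I_N, i.e. index l in P_N corresponds to ordinal l-1). *)
Definition Dom (N : nat) := (C * 'rV[C]_N * 'rV[R]_N)%type.

Definition Ccone (z : C) : Prop :=
  0 < complex.Re z \/ (complex.Re z = 0 /\ 0 < complex.Im z).
Definition in_mCcone (z : C) : Prop := Ccone (- z).
Definition in_iRstar (z : C) : Prop := complex.Re z = 0 /\ complex.Im z != 0.
Definition in_Copen (z : C) : Prop := 0 < complex.Re z.
Definition is_integer (t : R) : Prop := exists k : int, t = k%:~R.

(* \mathbb{D}_N  (for N = 0 this is C x C^0 x R^0, identified with C) *)
#[local] Unset Implicit Arguments.
Definition bbD (N : nat) : set (Dom N) :=
  [set x : Dom N | forall l : 'I_N, x.1.2 ord0 l = 0 -> ~ is_integer (x.2 ord0 l)].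

Definition pi_full (N : nat) (x : Dom N) : C :=
  x.1.1 - \sum_(l < N | `[< in_mCcone (x.1.2 ord0 l) >]) x.1.2 ord0 l.

Definition calD (N : nat) : set (Dom N) :=
  [set x : Dom N | bbD N x /\ in_Copen (pi_full N x) /\
           forall l : 'I_N, ~ in_iRstar (x.1.2 ord0 l)].

Definition calD_int (N : nat) : set (Dom N) := interior (calD N).

(* pi_L : D_N -> D_{N(L)}, given uniformly (covers L = empty, L = P_N
   with the identification C x C^0 x R^0 = C, and proper subsets). *)
Definition projL (N : nat) (L : {set 'I_N}) (x : Dom N) : Dom (N - #|L|) :=
  (x.1.1 - \sum_(l < N | (l \in L) && `[< in_mCcone (x.1.2 ord0 l) >])
             x.1.2 ord0 l,
   hatv L x.1.2, hatv L x.2).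

End Defs.

Arguments projL {R N} L x.

(* Main.v *)
Require Import Defs.
From HB Require Import structures.
From mathcomp Require Import all_boot all_order all_algebra.
From mathcomp Require Import all_classical all_reals all_analysis.
From mathcomp Require Import complex.
Import numFieldNormedType.Exports.
Import Order.TTheory GRing.Theory Num.Theory.
Local Open Scope ring_scope.
Local Open Scope classical_set_scope.
Set Implicit Arguments.
Unset Strict Implicit.
Definition ltO (N : nat) : rel 'I_N := fun a b => (a < b)%N.
Lemma ltO_trans N : transitive (@ltO N).
Proof. by move=> a b c; rewrite /ltO; apply: ltn_trans. Qed.
Lemma ltO_irr N : irreflexive (@ltO N).
Proof. by move=> a; rewrite /ltO ltnn. Qed.

Lemma sorted_enum_ord N (A : {set 'I_N}) : sorted (@ltO N) (enum A).
Proof.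
rewrite /enum_mem; apply: sorted_filter; first exact: ltO_trans.
rewrite -enumT; have := iota_ltn_sorted 0 N.
by rewrite -val_enum_ord sorted_map.
Qed.

Lemma phi_val N (L : {set 'I_N}) x0 i : phi L i = nth x0 (enum (~: L)) i.
Proof. by rewrite /phi (enum_val_nth x0). Qed.

Lemma phi_mono N (L : {set 'I_N}) : {homo phi L : i j / (i < j)%N >-> (i < j)%N}.
Proof.
move=> i j ij; rewrite (@phi_val _ L (phi L i) i) (@phi_val _ L (phi L i) j).
apply: (sorted_ltn_nth (@ltO_trans N)) => //; first exact: sorted_enum_ord.
  by rewrite inE -cardE card_setC_ord.
by rewrite inE -cardE card_setC_ord.
Qed.

Lemma phi_inj N (L : {set 'I_N}) : injective (phi L).
Proof. by move=> i j /enum_val_inj /cast_ord_inj. Qed.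

Lemma phi_notin N (L : {set 'I_N}) i : phi L i \notin L.
Proof. by have := enum_valP (cast_ord (esym (card_setC_ord L)) i); rewrite inE. Qed.

Lemma phi_surj N (L : {set 'I_N}) (k : 'I_N) : k \notin L -> exists i, phi L i = k.
Proof.
move=> kL; have kC : k \in ~: L by rewrite inE.
exists (cast_ord (card_setC_ord L) (enum_rank_in kC k)).
by rewrite /phi cast_ordK enum_rankK_in.
Qed.

Lemma map_phi N (L : {set 'I_N}) (lam : {set 'I_(N - #|L|)}) :
  map (phi L) (enum (~: lam)) = enum (~: (phi L @: lam :|: L)).
Proof.
apply: (irr_sorted_eq (@ltO_trans N) (@ltO_irr N)).
- by apply: homo_sorted; [exact: phi_mono | exact: sorted_enum_ord].
- exact: sorted_enum_ord.
move=> k; rewrite mem_enum !inE negb_or.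
apply/mapP/andP.
  move=> [i0]; rewrite mem_enum !inE => Hi ->.
  by rewrite mem_imset ?Hi ?phi_notin //; exact: phi_inj.
move=> [h1 h2]; have [i Hi] := phi_surj h2; exists i => //.
by rewrite mem_enum !inE; rewrite -Hi mem_imset in h1 => //; exact: phi_inj.
Qed.

Lemma card_U N (L : {set 'I_N}) (lam : {set 'I_(N - #|L|)}) :
  (N - #|L| - #|lam| = N - #|phi L @: lam :|: L|)%N.
Proof.
have := congr1 size (map_phi lam).
by rewrite size_map -!cardE !card_setC_ord.
Qed.

Lemma phi_comp N (L : {set 'I_N}) (lam : {set 'I_(N - #|L|)}) j :
  phi L (phi lam j) = phi (phi L @: lam :|: L) (cast_ord (card_U lam) j).
Proof.
have := congr1 (fun s => nth (phi L (phi lam j)) s j) (map_phi lam).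
rewrite /= (nth_map (phi lam j)); last by rewrite -cardE card_setC_ord.
by move=> H; rewrite [in LHS](phi_val (L:=lam) (phi lam j)) H (phi_val (L:=phi L @: lam :|: L) (phi L (phi lam j))).
Qed.

Section Sums.
Variable R : realType.
Local Notation C := R[i].

Definition gC (z : C) : C := if `[< in_mCcone z >] then z else 0.

Lemma Re_opp (z : C) : complex.Re (- z) = - complex.Re z.
Proof. by case: z. Qed.
Lemma Im_opp (z : C) : complex.Im (- z) = - complex.Im z.
Proof. by case: z. Qed.
Lemma Re_add (z w : C) : complex.Re (z + w) = complex.Re z + complex.Re w.
Proof. by case: z; case: w. Qed.

Lemma mC_iff (z : C) : in_mCcone z <->
  complex.Re z < 0 \/ (complex.Re z = 0 /\ complex.Im z < 0).
Proof.
rewrite /in_mCcone /Ccone Re_opp Im_opp oppr_gt0 oppr_gt0.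
split=> [[H|[H1 H2]]|[H|[H1 H2]]]; [by left|right|by left|right].
  by split=> //; apply/eqP; rewrite -oppr_eq0 H1.
by split=> //; rewrite H1 oppr0.
Qed.

Lemma Re_gC (z : C) : complex.Re (gC z) = Num.min (complex.Re z) 0.
Proof.
rewrite /gC; case: asboolP => [/mC_iff [H|[H1 H2]]|H].
- by rewrite min_l // ltW.
- by rewrite H1 minxx.
rewrite min_r //; rewrite leNgt; apply/negP => H'; apply: H; apply/mC_iff; by left.
Qed.

Lemma Re_sum (I : finType) (P : pred I) (F : I -> C) :
  complex.Re (\sum_(i | P i) F i) = \sum_(i | P i) complex.Re (F i).
Proof. by apply: (big_morph _ Re_add). Qed.

Lemma sum_gC (n : nat) (P : pred 'I_n) (F : 'I_n -> C) :
  \sum_(l < n | P l && `[< in_mCcone (F l) >]) F l = \sum_(l < n | P l) gC (F l).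
Proof. by rewrite big_mkcondr; apply: eq_bigr => l _; rewrite /gC; case: asboolP. Qed.

Lemma sum_gC_all (n : nat) (F : 'I_n -> C) :
  \sum_(l < n | `[< in_mCcone (F l) >]) F l = \sum_(l < n) gC (F l).
Proof. by rewrite big_mkcond; apply: eq_bigr => l _; rewrite /gC; case: asboolP. Qed.

Lemma Re_pi (n : nat) (x : Dom R n) :
  complex.Re (pi_full R n x) =
  complex.Re x.1.1 - \sum_(l < n) Num.min (complex.Re (x.1.2 ord0 l)) 0.
Proof.
rewrite /pi_full sum_gC_all Re_add Re_opp Re_sum.
by congr (_ - _); apply: eq_bigr => l _; rewrite Re_gC.
Qed.
End Sums.

Lemma sum_phi (V : nmodType) N (L : {set 'I_N}) (lam : {set 'I_(N - #|L|)}) (F : 'I_N -> V) :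
  \sum_(j in lam) F (phi L j) = \sum_(l in phi L @: lam) F l.
Proof. by rewrite big_imset //; move=> i j _ _; apply: phi_inj. Qed.

Lemma sum_U (V : nmodType) N (L : {set 'I_N}) (lam : {set 'I_(N - #|L|)}) (F : 'I_N -> V) :
  \sum_(l in phi L @: lam :|: L) F l = \sum_(l in phi L @: lam) F l + \sum_(l in L) F l.
Proof.
rewrite -bigU; last first.
  apply/pred0P => l /=; apply/negbTE/negP => /andP[/imsetP[j _ ->]].
  by rewrite (negbTE (phi_notin _)).  
by apply: eq_bigl => l; rewrite !inE.
Qed.

Lemma imset_phiT N (L : {set 'I_N}) : phi L @: (finset.setT : {set 'I_(N - #|L|)}) = ~: L.
Proof.
apply/setP => k; rewrite !inE; apply/imsetP/idP.
  by move=> [j _ ->]; exact: phi_notin.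
by move=> /phi_surj [j <-]; exists j.
Qed.

Lemma sum_split (V : nmodType) N (L : {set 'I_N}) (F : 'I_N -> V) :
  \sum_(l < N) F l = \sum_(l in L) F l + \sum_(j < N - #|L|) F (phi L j).
Proof.
rewrite (bigID (mem L)) /=; congr (_ + _).
have -> : \sum_(j < N - #|L|) F (phi L j) = \sum_(j in (finset.setT : {set 'I_(N - #|L|)})) F (phi L j).
  by apply: eq_bigl => j; rewrite inE.
rewrite sum_phi imset_phiT; apply: eq_bigl => l; by rewrite !inE.
Qed.
Lemma cvg_mx_entries (T : topologicalType) (U : Type) (F : set_system U) {FF : Filter F} m n (f : U -> 'M[T]_(m,n)) (M : 'M[T]_(m,n)) :
  (forall i j, (fun y => f y i j) @ F --> M i j) -> f @ F --> M.
Proof.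
move=> H A [P PM sPA].
have : \forall y \near F, forall i j, P i j (f y i j).
  apply: filter_forall => i; apply: filter_forall => j.
  exact: (H i j (P i j) (PM i j)).
by apply: filterS => y Hy; apply: sPA.
Qed.

Lemma cont_entry (T : topologicalType) m n i j : continuous (fun M : 'M[T]_(m,n) => M i j).
Proof.
move=> M A MA; exists (fun i' j' => if (i' == i) && (j' == j) then A else setT).
  move=> i' j'; have [->|_] := eqVneq i' i; have [->|_] := eqVneq j' j;
  rewrite ?eqxx //=; exact: filterT.
by move=> N /(_ i j); rewrite !eqxx.
Qed.

Section Topo.
Variable R : realType.
Local Notation C := R[i].

Lemma normC_Re (d : C) : `|complex.Re d| <= complex.Re `|d|.
Proof.
rewrite normc_def /= -sqrtr_sqr; apply: ler_wsqrtr.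
by rewrite lerDl sqr_ge0.
Qed.

Lemma cont_Re : continuous (@complex.Re R : C -> R).
Proof.
move=> z; have FF : Filter (nbhs (z : C^o)) by apply: nbhs_filter.
apply/(@cvgrPdist_lt _ _ _ _ FF) => e e0.
have : nbhs (z : C^o) (ball z (e%:C)%C) by apply: nbhsx_ballx; rewrite ltcR.
apply: filterS => t; rewrite /ball /= => H; clear FF.
have := normC_Re (z - t); move: H; rewrite ltcE /= => /andP[_ H1] H2.
by case: z t H1 H2 => a b [c d] /= H1 H2; apply: le_lt_trans H2 H1.
Qed.
End Topo.

Lemma cont_fst (T U : topologicalType) : continuous (@fst T U).
Proof. by move=> x; apply: cvg_fst. Qed.
Lemma cont_snd (T U : topologicalType) : continuous (@snd T U).
Proof. by move=> x; apply: cvg_snd. Qed.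

Section Topo2.
Variable R : realType.
Local Notation C := R[i].

Lemma cvgC_B (T : Type) (F : set_system T) {FF : Filter F} (f g : T -> C) a b :
  f @ F --> a -> g @ F --> b -> (fun y => f y - g y) @ F --> a - b.
Proof. exact: (@cvgB _ (C^o) _ _ _ f g a b). Qed.

Lemma cvgC_sum (T : Type) (F : set_system T) {FF : Filter F} n (P : pred 'I_n)
  (f : 'I_n -> T -> C) (a : 'I_n -> C) :
  (forall i, P i -> f i @ F --> a i) ->
  (fun y => \sum_(i < n | P i) f i y) @ F --> \sum_(i < n | P i) a i.
Proof. by move=> H; apply: (@cvg_big (C^o) _ +%R 0 P add_continuous). Qed.

Lemma cvgR_sum (T : Type) (F : set_system T) {FF : Filter F} n (P : pred 'I_n)
  (f : 'I_n -> T -> R) (a : 'I_n -> R) :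
  (forall i, P i -> f i @ F --> a i) ->
  (fun y => \sum_(i < n | P i) f i y) @ F --> \sum_(i < n | P i) a i.
Proof. by move=> H; apply: (@cvg_big R _ +%R 0 P add_continuous). Qed.

Lemma cont_w n : continuous (fun x : Dom R n => x.1.1).
Proof.
move=> x; apply: (continuous_comp (f := fst) (g := fst)); exact: cont_fst.
Qed.
Lemma cont_a n l : continuous (fun x : Dom R n => x.1.2 ord0 l).
Proof.
move=> x; apply: (continuous_comp (f := fst) (g := fun y : C * 'rV[C]_n => y.2 ord0 l)).
  exact: cont_fst.
apply: (continuous_comp (f := snd) (g := fun y : 'rV[C]_n => y ord0 l)).
  exact: cont_snd.
exact: cont_entry.
Qed.
Lemma cont_t n l : continuous (fun x : Dom R n => x.2 ord0 l).
Proof.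
move=> x; apply: (continuous_comp (f := snd) (g := fun y : 'rV[R]_n => y ord0 l)).
  exact: cont_snd.
exact: cont_entry.
Qed.

Lemma cont_Re_pi n : continuous (fun x : Dom R n => complex.Re (pi_full R n x)).
Proof.
have -> : (fun x : Dom R n => complex.Re (pi_full R n x)) =
  (fun x => complex.Re x.1.1 - \sum_(l < n) Num.min (complex.Re (x.1.2 ord0 l)) 0).
  by apply: funext => x; rewrite Re_pi.
move=> x; apply: cvgB.
  by apply: (continuous_comp (f := fun x : Dom R n => x.1.1)); [exact: cont_w | exact: cont_Re].
apply: cvgR_sum => l _.
apply: (continuous_min (f := fun x : Dom R n => complex.Re (x.1.2 ord0 l)) (g := fun=> 0)).
  by apply: (continuous_comp (f := fun x : Dom R n => x.1.2 ord0 l)); [exact: cont_a | exact: cont_Re].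
exact: cvg_cst.
Qed.
End Topo2.

Section Topo3.
Variable R : realType.
Local Notation C := R[i].

Lemma gC_vals (z : C) : gC z = z \/ gC z = 0.
Proof. by rewrite /gC; case: asboolP; [left|right]. Qed.

Lemma gC_neg (z : C) : complex.Re z < 0 -> gC z = z.
Proof. by move=> H; rewrite /gC; case: asboolP => // H'; exfalso; apply: H'; apply/mC_iff; left. Qed.

Lemma gC_pos (z : C) : 0 < complex.Re z -> gC z = 0.
Proof.
move=> H; rewrite /gC; case: asboolP => // /mC_iff [H'|[H1 _]].
  by have := lt_trans H H'; rewrite ltxx.
by rewrite H1 ltxx in H.
Qed.

Lemma gC_cont_at (T : topologicalType) (h : T -> C) x :
  {for x, continuous h} -> ~ in_iRstar (h x) -> {for x, continuous (fun y => gC (h y))}.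
Proof.
move=> ch Hx.
have cRe : (fun y => complex.Re (h y)) @ x --> complex.Re (h x).
  by apply: (continuous_comp (f := h)); [exact: ch | exact: cont_Re].
rewrite /prop_for /continuous_at.
have [Hn|Hp|H0] := ltgtP (complex.Re (h x)) 0.
- rewrite gC_neg //; apply: (cvg_trans _ ch); apply: near_eq_cvg.
  near=> y; rewrite gC_neg //; near: y; exact: cvgr_lt cRe _ Hn.
- apply: cvg_near_cst.
  near=> y; rewrite (gC_pos Hp) gC_pos //; near: y; exact: cvgr_gt cRe _ Hp.
have hx0 : h x = 0.
  move: Hx H0; rewrite /in_iRstar.
  move: (h x); case=> a b /= Hx Ha.
  apply/eqP; rewrite eq_complex /= Ha eqxx /=.
  by apply: contra_notT Hx => Hb; split.
rewrite hx0 (_ : gC 0 = 0); last by rewrite /gC; case: asboolP.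
have ch' : h @ x --> (0 : C^o) by rewrite -hx0.
apply/(@cvgrPdist_lt _ (C^o)) => e e0.
have := (@cvgrPdist_lt _ (C^o) _ _ (nbhs_filter x) h 0).1 ch' e e0.
apply: filterS => y.
by case: (gC_vals (h y)) => -> // _; rewrite subrr normr0.
Unshelve. all: by end_near.
Qed.
End Topo3.

Lemma Dom_eq (R : realType) n1 n2 (e : n1 = n2) (x : Dom R n1) (y : Dom R n2) :
  x.1.1 = y.1.1 -> (forall i, x.1.2 ord0 i = y.1.2 ord0 (cast_ord e i)) ->
  (forall i, x.2 ord0 i = y.2 ord0 (cast_ord e i)) ->
  existT (@Dom R) n1 x = existT (@Dom R) n2 y.
Proof.
case: n2 / e y => -[[w a] t]; case: x => [[w' a'] t'] /= -> Ha Ht.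
have -> : a' = a by apply/rowP => i; rewrite Ha cast_ord_id.
by have -> : t' = t by apply/rowP => i; rewrite Ht cast_ord_id.
Qed.

Definition ext (T : Type) N (L : {set 'I_N}) (v : 'rV[T]_(N - #|L|)) (d : T) : 'rV[T]_N :=
  \row_l (if [pick j | phi L j == l] is Some j then v ord0 j else d).

Lemma ext_phi (T : Type) N (L : {set 'I_N}) (v : 'rV[T]_(N - #|L|)) d j :
  ext v d ord0 (phi L j) = v ord0 j.
Proof.
rewrite mxE; case: pickP => [j' /eqP/phi_inj -> //|/(_ j)].
by rewrite eqxx.
Qed.

Lemma ext_L (T : Type) N (L : {set 'I_N}) (v : 'rV[T]_(N - #|L|)) d l :
  l \in L -> ext v d ord0 l = d.
Proof.
move=> lL; rewrite mxE; case: pickP => // j /eqP Hj.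
by move: (phi_notin j); rewrite Hj lL.
Qed.

Lemma hatv_ext (T : Type) N (L : {set 'I_N}) (v : 'rV[T]_(N - #|L|)) d :
  hatv L (ext v d) = v.
Proof. by apply/rowP => j; rewrite mxE ext_phi. Qed.

Lemma hatvE (T : Type) N (L : {set 'I_N}) (v : 'rV[T]_N) i j :
  hatv L v i j = v ord0 (phi L j).
Proof. by rewrite mxE. Qed.

Section Main.
Variable R : realType.
Local Notation C := R[i].

Lemma projL_cont_at N (L : {set 'I_N}) (x : Dom R N) :
  (forall l, ~ in_iRstar (x.1.2 ord0 l)) -> {for x, continuous (projL L)}.
Proof.
move=> Hx.
have -> : projL L = fun y : Dom R N =>
   (y.1.1 - \sum_(l < N | l \in L) gC (y.1.2 ord0 l), hatv L y.1.2, hatv L y.2).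
  by apply: funext => y; rewrite /projL sum_gC.
have c1 : (fun y : Dom R N => y.1.1 - \sum_(l < N | l \in L) gC (y.1.2 ord0 l)) @ x -->
    (x.1.1 - \sum_(l < N | l \in L) gC (x.1.2 ord0 l)).
  apply: cvgC_B; first exact: cont_w.
  apply: cvgC_sum => l _; apply: gC_cont_at; [exact: cont_a | exact: Hx].
have c2 : (fun y : Dom R N => hatv L y.1.2) @ x --> hatv L x.1.2.
  apply: cvg_mx_entries => i j; rewrite mxE.
  under eq_cvg do rewrite mxE.
  exact: cont_a.
have c3 : (fun y : Dom R N => hatv L y.2) @ x --> hatv L x.2.
  apply: cvg_mx_entries => i j; rewrite mxE.
  under eq_cvg do rewrite mxE.
  exact: cont_t.
exact: (cvg_pair (cvg_pair c1 c2) c3).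
Qed.

Lemma not_mC1 : ~ in_mCcone (1 : C).
Proof. by move/mC_iff => /= [H|[H _]]; [rewrite ltr10 in H | move: H; apply/eqP; rewrite oner_eq0]. Qed.

Lemma not_mC0 : ~ in_mCcone (0 : C).
Proof. by move/mC_iff => /= [H|[_ H]]; rewrite ltxx in H. Qed.

Lemma projL_ext N (L : {set 'I_N}) (y : Dom R (N - #|L|)) d t :
  ~ in_mCcone d -> projL L (y.1.1, ext y.1.2 d, ext y.2 t) = y.
Proof.
move=> Hd; case: y => [[w a] th]; rewrite /projL /= !hatv_ext big1 ?subr0 //.
by move=> l /andP[lL]; rewrite ext_L // => /asboolP.
Qed.

Lemma pi_projL N (L : {set 'I_N}) (x : Dom R N) :
  pi_full R _ (projL L x) = pi_full R N x.
Proof.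
rewrite /pi_full /projL /= sum_gC !sum_gC_all (sum_split L).
rewrite opprD addrA; congr (_ - _); apply: eq_bigr => j _; by rewrite hatvE.
Qed.

Lemma not_int_half : ~ is_integer (2^-1 : R).
Proof.
move=> [k Hk].
have h1 : (0 : R) < k%:~R by rewrite -Hk invr_gt0 ltr0n.
have h2 : k%:~R < (1 : R) by rewrite -Hk invf_lt1 ?ltr1n ?ltr0n.
rewrite ltr0z in h1; rewrite ltrz1 in h2.
by clear Hk; move: h1 h2; case: k => [[|n]|n].
Qed.
End Main.

Section Interior.
Variable R : realType.
Local Notation C := R[i].

Lemma small_imag (U : set C) : nbhs (0 : C) U -> exists t : R, t != 0 /\ U (Complex 0 t).
Proof.
move=> HU; have : nbhs (0 : C^o) U := HU.
move=> /nbhs_ballP [e e0 He].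
have e0' : (0 : C) < e := e0.
move: e0'; rewrite ltcE /= => /andP[/eqP Ie Re0].
exists (complex.Re e / 2); split; first by rewrite mulf_neq0 // ?gt_eqF // invr_eq0 pnatr_eq0.
apply: He; rewrite -ball_normE /= sub0r normrN normc_def /= ltcE /= Ie eqxx /=.
rewrite expr0n /= add0r sqrtr_sqr gtr0_norm ?divr_gt0 //.
by rewrite ltr_pdivrMr // ltr_pMr // ltr1n.
Qed.

Lemma row_upd_cont n (a : 'rV[C]_n) l (w : C) (t : 'rV[R]_n) (z0 : C) :
  (fun z : C => ((w, \row_k (if k == l then z else a ord0 k), t) : Dom R n)) @ z0 -->
  ((w, \row_k (if k == l then z0 else a ord0 k), t) : Dom R n).
Proof.
have c2 : (fun z : C => \row_k (if k == l then z else a ord0 k)) @ z0 -->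
        (\row_k (if k == l then z0 else a ord0 k) : 'rV[C]_n).
  apply: (@cvg_mx_entries _ _ _ (nbhs_filter z0)) => i k; rewrite mxE.
  have -> : (fun z : C => (\row_k0 (if k0 == l then z else a ord0 k0) : 'rV[C]_n) i k) =
      (fun z : C => if k == l then z else a ord0 k) by apply: funext => z; rewrite mxE.
  by case: eqP => _; [exact: cvg_id | exact: cvg_cst].
exact: (cvg_pair (cvg_pair (cvg_cst w) c2) (cvg_cst t)).
Qed.

Lemma calD_int_nz n (y : Dom R n) : calD_int R n y -> forall l, y.1.2 ord0 l != 0.
Proof.
move=> Hy l; apply/negP => /eqP Hl.
pose h := fun z : C => ((y.1.1, \row_k (if k == l then z else y.1.2 ord0 k), y.2) : Dom R n).
have h0 : h 0 = y.
  rewrite /h; case: y Hy Hl {h} => [[w a] t] /= _ Hl; congr (_, _, _).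
  by apply/rowP => k; rewrite mxE; case: eqP => // ->; rewrite Hl.
have hc : h @ (0 : C) --> h 0 by apply: row_upd_cont.
have : nbhs (0 : C) (h @^-1` calD R n) by apply: hc; rewrite h0; exact: Hy.
move=> /small_imag [t [t0 Ht]].
case: Ht => _ [_ /(_ l)]; apply; rewrite /h /= mxE eqxx; split => //.
Qed.

Lemma Re_nz (z : C) : z != 0 -> ~ in_iRstar z -> complex.Re z != 0.
Proof.
case: z => a b Hz Hi; apply/eqP => /= Ha; apply: Hi; split => //=.
by apply: contraNneq Hz => Hb; rewrite Ha Hb.
Qed.

Lemma calD_int_of n (y : Dom R n) : calD R n y -> (forall l, y.1.2 ord0 l != 0) -> calD_int R n y.
Proof.
move=> [Hb [Hpi Hi]] Hnz.
have N1 : \forall z \near y, 0 < complex.Re (pi_full R n z).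
  exact: (@cvgr_gt R _ (nbhs y) _ _ _ (@cont_Re_pi R n y) 0 Hpi).
have N2 : \forall z \near y, forall l : 'I_n, complex.Re ((z : Dom R n).1.2 ord0 l) != 0.
  apply: (filter_forall (nbhs_filter y)) => l; apply: (cvgr_neq0 (complex.Re (y.1.2 ord0 l))).
    apply: (continuous_comp (f := fun x : Dom R n => x.1.2 ord0 l)); [exact: cont_a | exact: cont_Re].
  exact: Re_nz.
rewrite /calD_int /interior /=.
have := @filterI _ (nbhs y) (nbhs_filter y) _ _ N1 N2.
apply: (@filterS _ (nbhs y) (nbhs_filter y)) => z [H1 H2]; split; [|split].
- move=> l Hz; have := H2 l; by rewrite Hz eqxx.
- exact: H1.
- move=> l [H _]; have := H2 l; by rewrite H eqxx.
Qed.
End Interior.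

Set Implicit Arguments.
Unset Strict Implicit.

Section Final.
Variable R : realType.
Local Notation C := R[i].

Lemma bbD_ext N (L : {set 'I_N}) (y : Dom R (N - #|L|)) (d : C) (t : R) :
  bbD R _ y -> (d = 0 -> ~ is_integer t) -> bbD R N (y.1.1, ext y.1.2 d, ext y.2 t).
Proof.
move=> Hy Hd l /=; case: (boolP (l \in L)) => lL.
  by rewrite !ext_L.
have [j <-] := phi_surj lL; rewrite !ext_phi; exact: Hy.
Qed.

Lemma bbD_proj N (L : {set 'I_N}) (x : Dom R N) : bbD R N x -> bbD R _ (projL L x).
Proof. by move=> Hx j /=; rewrite !hatvE; exact: Hx. Qed.

Lemma calD_proj N (L : {set 'I_N}) (x : Dom R N) : calD R N x -> calD R _ (projL L x).
Proof.
move=> [Hb [Hpi Hi]]; split; first exact: bbD_proj.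
split; first by rewrite /in_Copen pi_projL.
by move=> j /=; rewrite hatvE; exact: Hi.
Qed.
End Final.

Unset Implicit Arguments.

Theorem proposition4 (R : realType) (N : nat) (L : {set 'I_N}) :
  (* (i) *)
  (forall (lam : {set 'I_(N - #|L|)}) (x : Dom R N), bbD R N x ->
     existT (@Dom R) _ (projL lam (projL L x)) =
     existT (@Dom R) _ (projL ((phi L @: lam) :|: L) x))
  (* (ii) *)
  /\ projL L @` bbD R N = bbD R (N - #|L|)
  /\ {within calD R N, continuous (projL L)}
  /\ projL L @` calD R N = calD R (N - #|L|)
  /\ projL L @` [set x | calD R N x /\
                   forall l : 'I_N, x.1.2 ord0 l = 0 <-> l \in L]
       = calD_int R (N - #|L|)
  (* (iii) *)
  /\ {within bbD R N, continuous (fun x : Dom R N => complex.Re (pi_full R N x))}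
  /\ (fun x : Dom R N => complex.Re (pi_full R N x)) @` bbD R N = setT.
Proof.
split.
  move=> lam x _; apply: (@Dom_eq R _ _ (card_U lam) (projL lam (projL L x)) (projL (phi L @: lam :|: L) x)) => /=.
  - rewrite !sum_gC.
    have -> : \sum_(j < N - #|L| | j \in lam) gC (hatv L x.1.2 ord0 j) =
              \sum_(j in lam) gC (x.1.2 ord0 (phi L j)).
      by apply: eq_bigr => j _; rewrite hatvE.
    by rewrite (sum_phi lam (fun l => gC (x.1.2 ord0 l))) sum_U opprD addrA addrAC.
  - by move=> j; rewrite !hatvE phi_comp.
  - by move=> j; rewrite !hatvE phi_comp.
split.
  apply/seteqP; split.
  - by move=> _ [x Hx <-]; exact: bbD_proj.
  - move=> y Hy; exists (y.1.1, ext y.1.2 1, ext y.2 0); last exact: projL_ext (@not_mC1 R).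
    by apply: bbD_ext => // /eqP; rewrite oner_eq0.
split.
  apply: continuous_in_subspaceT => x; rewrite inE => -[_ [_ Hx]]; exact: projL_cont_at.
split.
  apply/seteqP; split.
  - by move=> _ [x Hx <-]; exact: calD_proj.
  - move=> y [Hb [Hpi Hi]]; exists (y.1.1, ext y.1.2 1, ext y.2 0); last exact: projL_ext (@not_mC1 R).
    split; first by apply: bbD_ext => // /eqP; rewrite oner_eq0.
    split; first by rewrite /in_Copen -(pi_projL L) projL_ext //; exact: not_mC1.
    move=> l /=; case: (boolP (l \in L)) => lL.
      by rewrite ext_L // => -[/= H _]; move: H; apply/eqP; rewrite oner_eq0.
    by have [j <-] := phi_surj lL; rewrite ext_phi; exact: Hi.
split.
  apply/seteqP; split.
  - move=> _ [x [Hx HL] <-]; apply: calD_int_of; first exact: calD_proj.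
    move=> j /=; rewrite hatvE; apply/eqP => /HL.
    by rewrite (negbTE (phi_notin _)).
  - move=> y Hy; have [Hb [Hpi Hi]] : calD R _ y := nbhs_singleton Hy.
    have Hnz := calD_int_nz Hy.
    exists (y.1.1, ext y.1.2 0, ext y.2 2^-1); last exact: projL_ext (@not_mC0 R).
    split; first split.
    + by apply: bbD_ext => // _; exact: not_int_half.
    + split; first by rewrite /in_Copen -(pi_projL L) projL_ext //; exact: not_mC0.
      move=> l /=; case: (boolP (l \in L)) => lL.
        by rewrite ext_L // => -[_ /= H]; rewrite eqxx in H.
      by have [j <-] := phi_surj lL; rewrite ext_phi; exact: Hi.
    + move=> l /=; split.
        move=> H; apply/negPn/negP => lL; have [j Hj] := phi_surj lL.
        by move: H; rewrite -Hj ext_phi => /eqP; rewrite (negbTE (Hnz j)).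
      by move=> lL; exact: ext_L.
split.
  by apply: continuous_subspaceT; exact: cont_Re_pi.
apply/seteqP; split => // r _.
exists ((r%:C)%C, const_mx 1, const_mx 0).
  by move=> l /=; rewrite mxE => /eqP; rewrite oner_eq0.
rewrite Re_pi big1 ?subr0 // => l _; rewrite mxE /=.
by rewrite min_r ?ler01.
Qed.
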